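(* Let $\mathbb{L}$ be a complete lattice, let $E^1,E^2$ be bounded spectral families in $\mathbb{L}$, and define $E_{\lambda,\mu}:=E^1_\lambda\wedge E^2_\mu$ for $\lambda,\mu\in\mathbb{R}$. Then $E=(E_{\lambda,\mu})_{\lambda,\mu\in\mathbb{R}}$ is a bounded complex spectral family, and the function associated to $E$ is $f_E=f_{E^1}+i\,f_{E^2}$.
   Context: A spectral family in $\mathbb{L}$ (with $0$, $1$) is a map $F:\mathbb{R}\to\mathbb{L}$ with $F_\lambda\le F_\mu$ for $\lambda\le\mu$, $F_\lambda=\bigwedge_{\mu>\lambda}F_\mu$, $\bigwedge_\lambda F_\lambda=0$, $\bigvee_\lambda F_\lambda=1$; it is bounded if there are $a\le b$ with $F_\lambda=0$ for $\lambda<a$ and $F_\lambda=1$ for $\lambda\ge b$; its associated function on the Stone spectrum is $f_F(\mathfrak{B})=\inf\{\lambda\mid F_\lambda\in\mathfrak{B}\}$. The Stone spectrum $\mathcal{Q}(\mathbb{L})$ is the set of quasipoints (maximal dual ideals: maximal nonempty upward closed subsets not containing $0$, closed under finite meets) with the topology generated by $\{\mathfrak{B}\mid a\in\mathfrak{B}\}$, $a\in\mathbb{L}$. A complex (2-parameter) spectral family is a map $E:\mathbb{R}^2\to\mathbb{L}$ with (i) $E_{\lambda_1,\lambda_2}\wedge E_{\mu_1,\mu_2}=E_{\min\{\lambda_1,\mu_1\},\min\{\lambda_2,\mu_2\}}$; (ii) $\bigwedge_{\lambda_1<\mu_1,\lambda_2<\mu_2}E_{\mu_1,\mu_2}=E_{\lambda_1,\lambda_2}$;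 (iii) $\bigwedge_{\lambda}E_{\lambda,\lambda_2}=0=\bigwedge_\lambda E_{\lambda_1,\lambda}$ for all $\lambda_1,\lambda_2$, and $\bigvee_{\lambda_1,\lambda_2}E_{\lambda_1,\lambda_2}=1$. It is bounded if there are $m,M'$ with $E_{\lambda_1,\lambda_2}=0$ whenever some $\lambda_k\le m$ and $E_{\lambda_1,\lambda_2}=1$ whenever $\lambda_1,\lambda_2\ge M'$. For such $E$, $f_E:\mathcal{Q}(\mathbb{L})\to\mathbb{C}$ is $f_E=f_{E,1}+if_{E,2}$ with $f_{E,1}(\mathfrak{B})=\inf\{\lambda\mid\exists\mu: E_{\lambda,\mu}\in\mathfrak{B}\}$ and $f_{E,2}(\mathfrak{B})=\inf\{\mu\mid\exists\lambda: E_{\lambda,\mu}\in\mathfrak{B}\}$. *)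

(* Defs.v *)
From HB Require Import structures.
From mathcomp Require Import all_boot all_order all_algebra.
From mathcomp Require Import boolp classical_sets reals.
From mathcomp Require Import complex.
Set Implicit Arguments. Unset Strict Implicit. Unset Printing Implicit Defensive.
Import Order.TTheory GRing.Theory Num.Theory.
Local Open Scope ring_scope.
Local Open Scope classical_set_scope.

Record complete_lattice := CompleteLattice {
  carrier :> Type;
  cl_le : carrier -> carrier -> Prop;
  cl_le_refl : forall a, cl_le a a;
  cl_le_trans : forall a b c, cl_le a b -> cl_le b c -> cl_le a c;
  cl_le_anti : forall a b, cl_le a b -> cl_le b a -> a = b;
  Inf : set carrier -> carrier;
  Sup : set carrier -> carrier;
  Inf_lb : forall S a, S a -> cl_le (Inf S) a;
  Inf_glb : forall S b, (forall a, S a -> cl_le b a) -> cl_le b (Inf S);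
  Sup_ub : forall S a, S a -> cl_le a (Sup S);
  Sup_lub : forall S b, (forall a, S a -> cl_le a b) -> cl_le (Sup S) b
}.

Section Lat.
Variable L : complete_lattice.

Definition cl_bot : L := Inf (@setT L).
Definition cl_top : L := Inf (@set0 L).
Definition cl_meet (a b : L) : L := Inf [set a; b].

Definition dual_ideal (B : set L) : Prop :=
  (exists a, B a) /\
  (forall a b, B a -> cl_le a b -> B b) /\
  (forall a b, B a -> B b -> B (cl_meet a b)) /\
  ~ B cl_bot.

Definition quasipoint (B : set L) : Prop :=
  dual_ideal B /\ forall C, dual_ideal C -> B `<=` C -> C = B.

Variable R : realType.

Definition spectral_family (F : R -> L) : Prop :=
  (forall l m, l <= m -> cl_le (F l) (F m)) /\
  (forall l, F l = Inf [set F m | m in [set m | l < m]]) /\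
  Inf (range F) = cl_bot /\
  Sup (range F) = cl_top.

Definition bounded_spectral_family (F : R -> L) : Prop :=
  spectral_family F /\
  exists a b, a <= b /\
    (forall l, l < a -> F l = cl_bot) /\ (forall l, b <= l -> F l = cl_top).

Definition assoc_fun (F : R -> L) (B : set L) : R := inf [set l | B (F l)].

Definition complex_spectral_family (E : R -> R -> L) : Prop :=
  (forall l1 l2 m1 m2,
      cl_meet (E l1 l2) (E m1 m2) = E (Num.min l1 m1) (Num.min l2 m2)) /\
  (forall l1 l2,
      Inf [set E m.1 m.2 | m in [set m : R * R | l1 < m.1 /\ l2 < m.2]]
      = E l1 l2) /\
  (forall l1 l2, Inf (range (fun l => E l l2)) = cl_bot /\
                 Inf (range (fun l => E l1 l)) = cl_bot) /\
  Sup [set E m.1 m.2 | m in [set: R * R]] = cl_top.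

Definition bounded_complex_spectral_family (E : R -> R -> L) : Prop :=
  complex_spectral_family E /\
  exists m M', (forall l1 l2, (l1 <= m \/ l2 <= m) -> E l1 l2 = cl_bot) /\
               (forall l1 l2, M' <= l1 -> M' <= l2 -> E l1 l2 = cl_top).

Definition assoc_fun1 (E : R -> R -> L) (B : set L) : R :=
  inf [set l | exists mu, B (E l mu)].
Definition assoc_fun2 (E : R -> R -> L) (B : set L) : R :=
  inf [set mu | exists l, B (E l mu)].

Definition assoc_cfun (E : R -> R -> L) (B : set L) : R[i] :=
  ((assoc_fun1 E B)%:C)%C + 'i%C * ((assoc_fun2 E B)%:C)%C.

End Lat.

(* Main.v *)
Require Import Defs.
From HB Require Import structures.
From mathcomp Require Import all_boot all_order all_algebra.
From mathcomp Require Import boolp classical_sets reals.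
From mathcomp Require Import complex.
From mathcomp Require Import lra.
Import Order.TTheory GRing.Theory Num.Theory.
Local Open Scope ring_scope.
Local Open Scope classical_set_scope.

Section H.
Context {L : complete_lattice}.
Implicit Types a b c : L.

Lemma meet_l a b : cl_le (cl_meet a b) a.
Proof. by apply: Inf_lb; left. Qed.
Lemma meet_r a b : cl_le (cl_meet a b) b.
Proof. by apply: Inf_lb; right. Qed.
Lemma meet_glb a b c : cl_le c a -> cl_le c b -> cl_le c (cl_meet a b).
Proof. by move=> ha hb; apply: Inf_glb => x [->|->]. Qed.
Lemma bot_le a : cl_le (cl_bot L) a.
Proof. exact: Inf_lb. Qed.
Lemma le_top a : cl_le a (cl_top L).
Proof. by apply: Inf_glb. Qed.
Lemma meet_topr a : cl_meet a (cl_top L) = a.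
Proof. apply: cl_le_anti; first exact: meet_l.
by apply: meet_glb; [apply: cl_le_refl|apply: le_top]. Qed.
Lemma meet_topl a : cl_meet (cl_top L) a = a.
Proof. apply: cl_le_anti; first exact: meet_r.
by apply: meet_glb; [apply: le_top|apply: cl_le_refl]. Qed.
Lemma meet_botl a : cl_meet (cl_bot L) a = cl_bot L.
Proof. apply: cl_le_anti; first exact: meet_l. exact: bot_le. Qed.
Lemma meet_botr a : cl_meet a (cl_bot L) = cl_bot L.
Proof. apply: cl_le_anti; first exact: meet_r. exact: bot_le. Qed.
End H.

Theorem proposition2p17 (L : complete_lattice) (R : realType)
  (E1 E2 : R -> L) :
  bounded_spectral_family E1 -> bounded_spectral_family E2 ->
  let E := fun l mu => cl_meet (E1 l) (E2 mu) in
  bounded_complex_spectral_family E /\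
  (forall B : set L, quasipoint B ->
     assoc_cfun E B = ((assoc_fun E1 B)%:C)%C + 'i%C * ((assoc_fun E2 B)%:C)%C).
Proof.
move=> [[m1 [rc1 [bo1 to1]]] [a1 [b1 [_ [ha1 hb1]]]]].
move=> [[m2 [rc2 [bo2 to2]]] [a2 [b2 [_ [ha2 hb2]]]]] E.
have minE (F : R -> L) (mF : forall l m, l <= m -> cl_le (F l) (F m)) x y :
    cl_le (cl_meet (F x) (F y)) (F (Num.min x y)).
  have /orP[h|h] := le_total x y.
    by rewrite (min_l h); apply: meet_l.
  by rewrite (min_r h); apply: meet_r.
split; first split.
- split.
  move=> l1 l2 n1 n2; rewrite /E; apply: cl_le_anti.
    apply: meet_glb.
      apply: cl_le_trans (minE _ m1 l1 n1); apply: meet_glb.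
        exact: cl_le_trans (meet_l _ _) (meet_l (E1 l1) (E2 l2)).
      exact: cl_le_trans (meet_r _ _) (meet_l (E1 n1) (E2 n2)).
    apply: cl_le_trans (minE _ m2 l2 n2); apply: meet_glb.
      exact: cl_le_trans (meet_l _ _) (meet_r (E1 l1) (E2 l2)).
    exact: cl_le_trans (meet_r _ _) (meet_r (E1 n1) (E2 n2)).
  apply: meet_glb; apply: meet_glb.
  + apply: cl_le_trans (meet_l _ _) _; apply: m1; rewrite ge_min lexx //.
  + apply: cl_le_trans (meet_r _ _) _; apply: m2; rewrite ge_min lexx //.
  + apply: cl_le_trans (meet_l _ _) _; apply: m1; rewrite ge_min lexx orbT //.
  + apply: cl_le_trans (meet_r _ _) _; apply: m2; rewrite ge_min lexx orbT //.
  split.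
  move=> l1 l2; rewrite /E; apply: cl_le_anti.
    apply: meet_glb.
      rewrite [E1 l1]rc1; apply: Inf_glb => _ [n hn <-].
      apply: cl_le_trans (meet_l (E1 n) (E2 (l2 + 1))).
      apply: Inf_lb; exists (n, l2 + 1) => //=; split => //; lra.
    rewrite [E2 l2]rc2; apply: Inf_glb => _ [n hn <-].
    apply: cl_le_trans (meet_r (E1 (l1 + 1)) (E2 n)).
    apply: Inf_lb; exists (l1 + 1, n) => //=; split => //; lra.
  apply: Inf_glb => _ [[n1 n2] /= [h1 h2] <-]; apply: meet_glb.
    apply: cl_le_trans (meet_l _ _) _; apply: m1; exact: ltW.
  apply: cl_le_trans (meet_r _ _) _; apply: m2; exact: ltW.
  split.
  move=> l1 l2; split; apply: cl_le_anti; try exact: bot_le.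
    rewrite -bo1; apply: Inf_glb => _ [l _ <-].
    apply: cl_le_trans (meet_l (E1 l) (E2 l2)); apply: Inf_lb; by exists l.
  rewrite -bo2; apply: Inf_glb => _ [l _ <-].
  apply: cl_le_trans (meet_r (E1 l1) (E2 l)); apply: Inf_lb; by exists l.
  apply: cl_le_anti; first exact: le_top.
  have -> : cl_top L = E b1 b2.
    by rewrite /E (hb1 _ (lexx _)) (hb2 _ (lexx _)) meet_topr.
  by apply: Sup_ub; exists (b1, b2).
- exists (Num.min a1 a2 - 1), (Num.max b1 b2); split.
    have h1 : Num.min a1 a2 <= a1 by rewrite ge_min lexx.
    have h2 : Num.min a1 a2 <= a2 by rewrite ge_min lexx orbT.
    move=> l1 l2 [h|h]; rewrite /E.
      rewrite ha1 ?meet_botl //; lra.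
    rewrite ha2 ?meet_botr //; lra.
  move=> l1 l2 h1 h2; rewrite /E.
  have g1 : b1 <= l1 by apply: le_trans h1; rewrite le_max lexx.
  have g2 : b2 <= l2 by apply: le_trans h2; rewrite le_max lexx orbT.
  by rewrite hb1 // hb2 // meet_topr.
- move=> B [[_ [up _]] _].
  rewrite /assoc_cfun /assoc_fun1 /assoc_fun2 /assoc_fun.
  have -> : [set l | exists mu, B (E l mu)] = [set l | B (E1 l)].
    apply/seteqP; split => l /=.
      by move=> [mu h]; apply: up h _; apply: meet_l.
    by move=> h; exists b2; rewrite /E (hb2 _ (lexx _)) meet_topr.
  have -> : [set mu | exists l, B (E l mu)] = [set mu | B (E2 mu)].
    apply/seteqP; split => l /=.
      by move=> [mu h]; apply: up h _; apply: meet_r.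
    by move=> h; exists b1; rewrite /E (hb1 _ (lexx _)) meet_topl.
  by [].
Qed.
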